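(* Under the setting below, let $X$ be such that $k^*(X)=\arg\max_{k\in K}p_\theta(k\mid X)$ is unique. Then for every translation $\mathbf g\in\mathbb{Z}^3$, $k^*(T_{\mathbf g}X)$ is unique and equals $\pi_{\mathbf g}(k^*(X))$, and $$\mathrm{APT}(T_{\mathbf g}X)=T_{\mathbf g'}\,\mathrm{APT}(X),\qquad \mathbf g'=\Big\lfloor \tfrac{k^*(X)+\mathbf g}{\mathbf s}\Big\rfloor$$ (floor and division componentwise), where $T_{\mathbf g'}$ is a circular translation of the coarse grid.
   Context: Volumes $X:\mathbb{Z}_D\times\mathbb{Z}_H\times\mathbb{Z}_W\to\mathbb{R}^C$ with periodic boundary conditions; patch size $\mathbf s=(s_D,s_H,s_W)$ with $s_D\mid D$, $s_H\mid H$, $s_W\mid W$. Translation: $(T_{\mathbf g}Y)(x)=Y(x-\mathbf g)$, indices modulo the grid size. Phase index set $K=\{0,\dots,s_D-1\}\times\{0,\dots,s_H-1\}\times\{0,\dots,s_W-1\}$. Polyphase decomposition: for $k=(p,q,r)\in K$, $\Psi(X)_k(i,j,l)=X(i s_D+p,\;j s_H+q,\;l s_W+r)$ on the coarse grid $V=\mathbb{Z}_{D/s_D}\times\mathbb{Z}_{H/s_H}\times\mathbb{Z}_{W/s_W}$. $\tilde f_\theta$ maps volumes on $V$ to real-valued fields on $V$ and is translation-equivariant: $\tilde f_\theta(T_{\mathbf c}Y)=T_{\mathbf c}\tilde f_\theta(Y)$. Score $f_\theta(Y)=\frac1{|V|}\sum_{v\in V}\tilde f_\theta(Y)[v]$;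 selection probabilities $p_\theta(k\mid X)=\exp[f_\theta(\Psi(X)_k)]/\sum_{k'\in K}\exp[f_\theta(\Psi(X)_{k'})]$. Permutation $\pi_{\mathbf g}(k)=(k+\mathbf g)\bmod\mathbf s$ componentwise. Adaptive Phase Tokenization (deterministic/inference mode): $\mathrm{APT}(X)=\Psi(X)_{k^*(X)}$ with $k^*(X)=\arg\max_{k\in K}p_\theta(k\mid X)$. *)

(* Defs.v *)
From HB Require Import structures.
From mathcomp Require Import all_boot all_order all_algebra.
From mathcomp Require Import reals.
From mathcomp Require Import sequences.
From mathcomp.analysis Require Import exp.
Set Implicit Arguments. Unset Strict Implicit. Unset Printing Implicit Defensive.
Import Order.TTheory GRing.Theory Num.Theory.
Local Open Scope ring_scope.

Lemma ord_pos n (i : 'I_n) : (0 < n)%N.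
Proof. by case: n i => [[]|]. Qed.

Lemma divn_pos_pos (D s : nat) : (0 < D %/ s)%N -> (0 < D)%N.
Proof. by case: D => //; rewrite div0n. Qed.

Lemma zmod_lt (n : nat) (Hn : (0 < n)%N) (k : int) : (`|(k %% n)%Z|%N < n)%N.
Proof.
have n0 : (n%:Z != 0) by rewrite eqz_nat -lt0n.
have h0 := modz_ge0 k n0.
have h1 : ((k %% n)%Z < n%:Z) by apply: ltz_pmod; rewrite ltz_nat.
by rewrite -ltz_nat gez0_abs.
Qed.

Definition zord (n : nat) (Hn : (0 < n)%N) (k : int) : 'I_n :=
  Ordinal (zmod_lt Hn k).

Definition addz_ord n (i : 'I_n) (z : int) : 'I_n := zord (ord_pos i) (i%:Z + z).

Definition grid (a b c : nat) := ('I_a * 'I_b * 'I_c)%type.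
Definition int3 := (int * int * int)%type.

Definition transl (a b c : nat) (T : Type) (g : int3) (Y : grid a b c -> T)
  : grid a b c -> T :=
  fun x => Y (addz_ord x.1.1 (- g.1.1), addz_ord x.1.2 (- g.1.2),
              addz_ord x.2 (- g.2)).

Definition phases (sD sH sW : nat) := grid sD sH sW.
Definition coarse (D H W sD sH sW : nat) := grid (D %/ sD) (H %/ sH) (W %/ sW).

Definition fine_ord (D s : nat) (i : 'I_(D %/ s)) (p : nat) : 'I_D :=
  zord (divn_pos_pos (ord_pos i)) ((i * s + p)%N%:Z).

Definition polyphase (T : Type) (D H W sD sH sW : nat)
  (X : grid D H W -> T) (k : phases sD sH sW) : coarse D H W sD sH sW -> T :=
  fun v => X (fine_ord v.1.1 k.1.1, fine_ord v.1.2 k.1.2, fine_ord v.2 k.2).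

Section APT.
Variables (R : realType) (C D H W sD sH sW : nat).
Local Notation V := (coarse D H W sD sH sW).
Local Notation K := (phases sD sH sW).
Variable ftilde : (V -> 'rV[R]_C) -> V -> R.

Definition score (Y : V -> 'rV[R]_C) : R :=
  (#|{: V}|%:R)^-1 * \sum_(v : V) ftilde Y v.

Definition prob (X : grid D H W -> 'rV[R]_C) (k : K) : R :=
  expR (score (polyphase X k)) /
  \sum_(k' : K) expR (score (polyphase X k')).

(* k*(X) = argmax_k p(k|X); k0 is only the default used by arg max
   (it is irrelevant when the maximiser is unique) *)
Definition kstar (k0 : K) (X : grid D H W -> 'rV[R]_C) : K :=
  [arg max_(k > k0) prob X k]%O.

Definition APT (k0 : K) (X : grid D H W -> 'rV[R]_C) : V -> 'rV[R]_C :=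
  polyphase X (kstar k0 X).

End APT.

Definition unique_argmax (R : realType) (I : finType) (f : I -> R) (k : I) :=
  forall k', k' != k -> f k' < f k.

Definition perm_phase (sD sH sW : nat) (g : int3) (k : phases sD sH sW)
  : phases sD sH sW :=
  (addz_ord k.1.1 g.1.1, addz_ord k.1.2 g.1.2, addz_ord k.2 g.2).

Definition coarse_shift (sD sH sW : nat) (g : int3) (k : phases sD sH sW) : int3 :=
  (((k.1.1%:Z + g.1.1) %/ sD%:Z)%Z, ((k.1.2%:Z + g.1.2) %/ sH%:Z)%Z,
   ((k.2%:Z + g.2) %/ sW%:Z)%Z).

Definition transl_equivariant (R : realType) (C a b c : nat)
  (F : (grid a b c -> 'rV[R]_C) -> grid a b c -> R) :=
  forall (g : int3) (Y : grid a b c -> 'rV[R]_C), F (transl g Y) = transl g (F Y).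

(* Main.v *)
Require Import Defs.
From HB Require Import structures.
From mathcomp Require Import all_boot all_order all_algebra.
From mathcomp Require Import reals.
From mathcomp Require Import sequences.
From mathcomp.analysis Require Import exp.
From mathcomp Require Import zify ring lra.
From Stdlib Require Import FunctionalExtensionality.
Import Order.TTheory GRing.Theory Num.Theory.
Local Open Scope ring_scope.

Lemma zordK n (Hn : (0 < n)%N) k : ((zord Hn k : nat)%:Z = (k %% n)%Z).
Proof.
rewrite /zord /= gez0_abs //; apply: modz_ge0; by rewrite eqz_nat -lt0n.
Qed.

Lemma zord_eq n (Hn : (0 < n)%N) a b : (a = b %[mod n])%Z -> zord Hn a = zord Hn b.
Proof. move=> e; apply: val_inj; apply/eqP; rewrite -eqz_nat !zordK e //. Qed.

Lemma fine_shift D s (hs : (s %| D)%N) (i : 'I_(D %/ s)) (m : 'I_s) (g : int) :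
  fine_ord (addz_ord i (- ((m%:Z + g) %/ s)%Z)) m
  = addz_ord (fine_ord i (addz_ord m g)) (- g).
Proof.
apply: val_inj; apply/eqP; rewrite -eqz_nat; apply/eqP.
rewrite /fine_ord /addz_ord !zordK !PoszD !PoszM !zordK.
have s0 : (0 < s)%N := ord_pos m.
have eD : D%:Z = (D %/ s)%:Z * s%:Z by rewrite -PoszM divnK.
rewrite eD mulz_modl ?ltz_nat // !modzDml.
congr (_ %% _)%Z.
have e := divz_eq (m%:Z + g) s.
set q := ((m%:Z + g) %/ s)%Z in e *. set r := ((m%:Z + g) %% s)%Z in e *.
have -> : r = m%:Z + g - q * s%:Z by rewrite e; ring.
ring.
Qed.


Lemma addz_ordK n (i : 'I_n) z : addz_ord (addz_ord i z) (- z) = i.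
Proof.
apply: val_inj; apply/eqP; rewrite -eqz_nat; apply/eqP.
rewrite /addz_ord !zordK modzDml addrK modz_small //.
by rewrite ltz_nat ltn_ord.
Qed.

Definition neg3 (g : int3) : int3 := (- g.1.1, - g.1.2, - g.2).

Lemma perm_phaseK sD sH sW g : cancel (@perm_phase sD sH sW g) (perm_phase (neg3 g)).
Proof. by case=> [[a b] c]; rewrite /perm_phase /= !addz_ordK. Qed.

Lemma perm_phaseKV sD sH sW g : cancel (@perm_phase sD sH sW (neg3 g)) (perm_phase g).
Proof.
case=> [[a b] c]; rewrite /perm_phase /=.
by rewrite -{2}(opprK g.1.1) -{2}(opprK g.1.2) -{2}(opprK g.2) !addz_ordK.
Qed.

Lemma polyphase_transl (T : Type) D H W sD sH sW
  (hD : (sD %| D)%N) (hH : (sH %| H)%N) (hW : (sW %| W)%N)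
  (X : grid D H W -> T) (g : int3) (m : phases sD sH sW) :
  polyphase (transl g X) (perm_phase g m)
  = transl (coarse_shift g m) (polyphase X m).
Proof.
apply: functional_extensionality => -[[a b] c].
by rewrite /polyphase /transl /perm_phase /coarse_shift /= !fine_shift.
Qed.

Lemma score_transl (R : realType) C D H W sD sH sW
  (F : (coarse D H W sD sH sW -> 'rV[R]_C) -> coarse D H W sD sH sW -> R)
  (hF : transl_equivariant F) (g : int3) Y :
  score F (transl g Y) = score F Y.
Proof.
rewrite /score hF; congr (_ * _).
pose sh := fun x : coarse D H W sD sH sW =>
  (addz_ord x.1.1 (- g.1.1), addz_ord x.1.2 (- g.1.2), addz_ord x.2 (- g.2)).
pose sh' := fun x : coarse D H W sD sH sW =>
  (addz_ord x.1.1 (g.1.1), addz_ord x.1.2 (g.1.2), addz_ord x.2 (g.2)).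
have K : cancel sh sh'.
  case=> [[u v] w]; rewrite /sh /sh' /=.
  by rewrite -{2}(opprK g.1.1) -{2}(opprK g.1.2) -{2}(opprK g.2) !addz_ordK.
rewrite [RHS](reindex_inj (can_inj K)) /=.
by apply: eq_bigr.
Qed.

Lemma prob_transl (R : realType) (C D H W sD sH sW : nat)
  (hD : (sD %| D)%N) (hH : (sH %| H)%N) (hW : (sW %| W)%N)
  (ftilde : (coarse D H W sD sH sW -> 'rV[R]_C) -> coarse D H W sD sH sW -> R)
  (hequiv : transl_equivariant ftilde) (X : grid D H W -> 'rV[R]_C) g m :
  prob ftilde (transl g X) (perm_phase g m) = prob ftilde X m.
Proof.
rewrite /prob polyphase_transl // score_transl //; congr (_ / _).
rewrite (reindex_inj (can_inj (@perm_phaseK sD sH sW g))) /=.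
apply: eq_bigr => k _.
by rewrite polyphase_transl // score_transl.
Qed.

Lemma argmax_unique (R : realType) (I : finType) (f : I -> R) k k0 :
  unique_argmax f k -> [arg max_(i > k0) f i]%O = k.
Proof.
move=> U; case: arg_maxP => // i _ Hi.
case: (eqVneq i k) => // ne.
have h1 := U _ ne; have h2 : f k <= f i := Hi k isT.
by rewrite ltNge h2 in h1.
Qed.

Theorem mainTheorem3 (R : realType) (C D H W sD sH sW : nat)
  (hD : (sD %| D)%N) (hH : (sH %| H)%N) (hW : (sW %| W)%N)
  (ftilde : (coarse D H W sD sH sW -> 'rV[R]_C) -> coarse D H W sD sH sW -> R)
  (hequiv : transl_equivariant ftilde)
  (k0 : phases sD sH sW)
  (X : grid D H W -> 'rV[R]_C)
  (huniq : exists k, unique_argmax (prob ftilde X) k) :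
  forall g : int3,
    (exists k, unique_argmax (prob ftilde (transl g X)) k) /\
    kstar ftilde k0 (transl g X) = perm_phase g (kstar ftilde k0 X) /\
    APT ftilde k0 (transl g X)
      = transl (coarse_shift g (kstar ftilde k0 X)) (APT ftilde k0 X).
Proof.
move=> g; case: huniq => k U.
have U' : unique_argmax (prob ftilde (transl g X)) (perm_phase g k).
  move=> k' nk'.
  rewrite -(@perm_phaseKV _ _ _ g k') !prob_transl //.
  apply: U; apply: contra nk' => /eqP e.
  by rewrite -e perm_phaseKV.
have e1 : kstar ftilde k0 X = k by apply: argmax_unique.
have e2 : kstar ftilde k0 (transl g X) = perm_phase g k by apply: argmax_unique.
split; first by exists (perm_phase g k).
split; first by rewrite e1 e2.
by rewrite /APT e2 e1 polyphase_transl.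
Qed.
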